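(* Let $f$ be a real function defined on $\mathbb{T}^\kappa=\{a,\dots,b-1\}$ and $g$ a real function defined on $\mathbb{T}=\{a,\dots,b\}$. Fix $0<\alpha\le 1$ and put $\mu=1-\alpha$. Then $$\sum_{t=a}^{b-1}f(t)\,({}_a\Delta_t^{\alpha}g)(t)=f(b-1)g(b)-f(a)g(a)+\sum_{t=a}^{b-2}({}_t\Delta_{\rho(b)}^{\alpha}f)(t)\,g(t+1)$$ $$\qquad+\frac{\mu}{\Gamma(\mu+1)}\,g(a)\Bigl(\sum_{t=a}^{b-1}(t+\mu-a)^{(\mu-1)}f(t)-\sum_{t=a+1}^{b-1}(t+\mu-a-1)^{(\mu-1)}f(t)\Bigr),$$ where ${}_t\Delta_{\rho(b)}^{\alpha}f$ denotes the right fractional difference with upper endpoint $\rho(b)=b-1$.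
   Context: Let $a\in\mathbb{R}$, $b=a+k$ with $k\in\mathbb{N}$, $k\ge2$, $\mathbb{T}=\{a,a+1,\dots,b\}$, $\sigma(t)=t+1$, $\rho(t)=t-1$, $\Delta g(t)=g(t+1)-g(t)$. For real $x,y$, $x^{(y)}:=\Gamma(x+1)/\Gamma(x+1-y)$ (division at a pole yields zero). For $c\in\mathbb{T}$, $g$ defined on $\{a,\dots,c\}$ and $\nu\ge0$, define on $\{a,\dots,c\}$: left fractional sum $({}_a\Delta_t^{-\nu}g)(t):=g(t)+\frac{\nu}{\Gamma(\nu+1)}\sum_{s=a}^{t-1}(t+\nu-\sigma(s))^{(\nu-1)}g(s)$; right fractional sum with endpoint $c$: $({}_t\Delta_c^{-\nu}g)(t):=g(t)+\frac{\nu}{\Gamma(\nu+1)}\sum_{s=t+1}^{c}(s+\nu-\sigma(t))^{(\nu-1)}g(s)$. For $0<\alpha\le1$ and $\mu=1-\alpha$, the left and right fractional differences of order $\alpha$ are, for $t\in\{a,\dots,c-1\}$, $({}_a\Delta_t^{\alpha}g)(t):=\Delta\bigl({}_a\Delta^{-\mu}g\bigr)(t)$ and $({}_t\Delta_c^{\alpha}g)(t):=-\Delta\bigl({}_t\Delta_c^{-\mu}g\bigr)(t)$, where $\Delta$ acts on the function $\tau\mapsto({}_a\Delta_\tau^{-\mu}g)(\tau)$, resp. $\tau\mapsto({}_\tau\Delta_c^{-\mu}g)(\tau)$. *)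

(* Defs.v *)
From Stdlib Require Import Reals Arith ClassicalEpsilon.
Open Scope R_scope.

Fixpoint rsum (n : nat) (F : nat -> R) : R :=
  match n with
  | O => 0
  | S m => rsum m F + F m
  end.

Fixpoint rpoch (x : R) (n : nat) : R :=
  match n with
  | O => x
  | S m => rpoch x m * (x + INR (S m))
  end.

(* Gauss/Euler product for the reciprocal Gamma function:
   1/Gamma(x) = lim_{n->oo} x(x+1)...(x+n) / (n! n^x).
   This limit exists for every real x, and equals 0 exactly at the poles
   x = 0,-1,-2,... of Gamma. *)
Definition rgamma_seq (x : R) (n : nat) : R :=
  rpoch x (S n) / (INR (Factorial.fact (S n)) * Rpower (INR (S n)) x).

Definition rgamma (x : R) : R :=
  epsilon (inhabits 0) (fun l => Un_cv (rgamma_seq x) l).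

(* Gamma function (at poles the value is irrelevant for our purposes). *)
Definition Gamma (x : R) : R := / rgamma x.

(* Generalized falling function x^(y) = Gamma(x+1)/Gamma(x+1-y),
   with division by Gamma at a pole giving 0 (1/Gamma(pole) = 0). *)
Definition falling (x y : R) : R := Gamma (x + 1) * rgamma (x + 1 - y).

(* Points of the time scale T = {a, a+1, ..., b}: the point of index j is a + j. *)

(* Left fractional sum (_a Delta_t^{-nu} g)(t) at t = a + j:
   g(t) + nu/Gamma(nu+1) * sum_{s=a}^{t-1} (t+nu-sigma(s))^(nu-1) g(s). *)
Definition lfsum (a nu : R) (g : R -> R) (j : nat) : R :=
  let t := a + INR j in
  g t + nu / Gamma (nu + 1) *
        rsum j (fun i => let s := a + INR i in
                         falling (t + nu - (s + 1)) (nu - 1) * g s).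

(* Right fractional sum with endpoint c = a + m, at t = a + j:
   g(t) + nu/Gamma(nu+1) * sum_{s=t+1}^{c} (s+nu-sigma(t))^(nu-1) g(s). *)
Definition rfsum (a : R) (m : nat) (nu : R) (g : R -> R) (j : nat) : R :=
  let t := a + INR j in
  g t + nu / Gamma (nu + 1) *
        rsum (m - j) (fun i => let s := a + INR (j + 1 + i) in
                               falling (s + nu - (t + 1)) (nu - 1) * g s).

Definition lfdiff (a alpha : R) (g : R -> R) (j : nat) : R :=
  lfsum a (1 - alpha) g (S j) - lfsum a (1 - alpha) g j.

Definition rfdiff (a : R) (m : nat) (alpha : R) (g : R -> R) (j : nat) : R :=
  - (rfsum a m (1 - alpha) g (S j) - rfsum a m (1 - alpha) g j).

(* Main.v *)
Require Import Defs.
From Stdlib Require Import Reals Lra Lia.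
Open Scope R_scope.

Lemma rsumS n F : rsum (S n) F = rsum n F + F n.
Proof. reflexivity. Qed.

Lemma rsum_ext n F G : (forall i, (i < n)%nat -> F i = G i) -> rsum n F = rsum n G.
Proof. induction n; simpl; intros H; [reflexivity|]. rewrite IHn by (intros; apply H; lia). rewrite H by lia. reflexivity. Qed.

Lemma rsum_plus n F G : rsum n (fun i => F i + G i) = rsum n F + rsum n G.
Proof. induction n; simpl; [ring|]. rewrite IHn. ring. Qed.

Lemma rsum_minus n F G : rsum n (fun i => F i - G i) = rsum n F - rsum n G.
Proof. induction n; simpl; [ring|]. rewrite IHn. ring. Qed.

Lemma rsum_scal n x F : rsum n (fun i => x * F i) = x * rsum n F.
Proof. induction n; simpl; [ring|]. rewrite IHn. ring. Qed.

Lemma rsum_shift n F : rsum (S n) F = F 0%nat + rsum n (fun i => F (S i)).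
Proof. induction n; simpl in *; [ring|]. rewrite IHn. ring. Qed.

Lemma swap1 n (F : nat -> nat -> R) :
  rsum n (fun j => rsum (S j) (F j)) = rsum n (fun i => rsum (n - i) (fun d => F (i + d)%nat i)).
Proof.
  induction n; [reflexivity|].
  change (rsum (S n) (fun j => rsum (S j) (F j))) with
    (rsum n (fun j => rsum (S j) (F j)) + rsum (S n) (F n)).
  rewrite IHn.
  transitivity (rsum (S n) (fun i => rsum (n - i) (fun d => F (i + d)%nat i) + F n i)).
  - rewrite rsum_plus. rewrite (rsumS n (fun i => rsum (n - i) _)). rewrite (Nat.sub_diag n). change (rsum 0 ?G) with 0. ring.
  - apply rsum_ext. intros i Hi. replace (S n - i)%nat with (S (n - i)) by lia.
    simpl. replace (i + (n - i))%nat with n by lia. reflexivity.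
Qed.

Lemma swap2 n (F : nat -> nat -> R) :
  rsum n (fun j => rsum j (F j)) = rsum n (fun i => rsum (n - i - 1) (fun d => F (i + 1 + d)%nat i)).
Proof.
  induction n; [reflexivity|].
  change (rsum (S n) (fun j => rsum j (F j))) with
    (rsum n (fun j => rsum j (F j)) + rsum n (F n)).
  rewrite IHn.
  transitivity (rsum (S n) (fun i => rsum (n - i - 1) (fun d => F (i + 1 + d)%nat i) + (if Nat.ltb i n then F n i else 0))).
  - rewrite rsum_plus. rewrite (rsumS n (fun i => rsum (n - i - 1) _)). rewrite (rsumS n (fun i => if Nat.ltb i n then F n i else 0)). rewrite Nat.ltb_irrefl.
    replace (n - n - 1)%nat with 0%nat by lia. change (rsum 0 ?G) with 0.
    rewrite (rsum_ext n (fun i => if Nat.ltb i n then F n i else 0) (F n)).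
    + ring.
    + intros i Hi. apply Nat.ltb_lt in Hi. rewrite Hi. reflexivity.
  - apply rsum_ext. intros i Hi. destruct (Nat.ltb i n) eqn:E.
    + apply Nat.ltb_lt in E. replace (S n - i - 1)%nat with (S (n - i - 1)) by lia.
      simpl. replace (i + 1 + (n - i - 1))%nat with n by lia. reflexivity.
    + apply Nat.ltb_ge in E. replace (S n - i - 1)%nat with (n - i - 1)%nat by lia. ring.
Qed.

Lemma part1 (fs gs : nat -> R) m :
  rsum (S m) (fun j => fs j * (gs (S j) - gs j)) =
  fs m * gs (S m) - fs 0%nat * gs 0%nat + rsum m (fun j => (fs j - fs (S j)) * gs (S j)).
Proof. induction m; simpl in *; [ring|]. rewrite IHm. ring. Qed.

Lemma key (fs gs h : nat -> R) (c : R) (m : nat) :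
 rsum (S m) (fun j => fs j * ((gs (S j) + c * rsum (S j) (fun i => h (j - i)%nat * gs i)) - (gs j + c * rsum j (fun i => h (j - i - 1)%nat * gs i))))
 = fs m * gs (S m) - fs 0%nat * gs 0%nat
 + rsum m (fun j => - ((fs (S j) + c * rsum (m - S j) (fun i => h i * fs (S j + 1 + i)%nat)) - (fs j + c * rsum (m - j) (fun i => h i * fs (j+1+i)%nat))) * gs (S j))
 + c * gs 0%nat * (rsum (S m) (fun i => h i * fs i) - rsum m (fun i => h i * fs (S i))).
Proof.
  set (n := S m).
  transitivity (rsum n (fun j => fs j * (gs (S j) - gs j)) +
    c * (rsum n (fun j => rsum (S j) (fun i => fs j * (h (j - i)%nat * gs i)))
       - rsum n (fun j => rsum j (fun i => fs j * (h (j - i - 1)%nat * gs i))))).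
  { rewrite <- rsum_minus, <- rsum_scal, <- rsum_plus. apply rsum_ext; intros j _.
    rewrite !rsum_scal. ring. }
  rewrite swap1, swap2. unfold n. rewrite part1.
  transitivity (fs m * gs (S m) - fs 0%nat * gs 0%nat +
    rsum m (fun j => (fs j - fs (S j)) * gs (S j)) +
    c * rsum (S m) (fun p => gs p * (rsum (S m - p) (fun d => h d * fs (p + d)%nat)
                               - rsum (S m - p - 1) (fun d => h d * fs (p + 1 + d)%nat)))).
  { f_equal. f_equal. rewrite <- rsum_minus. apply rsum_ext; intros p _.
    rewrite Rmult_minus_distr_l, <- !rsum_scal. f_equal.
    - apply rsum_ext; intros d _. replace (p + d - p)%nat with d by lia. ring.
    - apply rsum_ext; intros d _. replace (p + 1 + d - p - 1)%nat with d by lia. ring. }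
  rewrite (rsum_shift m (fun p => gs p * _)).
  replace (S m - 0)%nat with (S m) by lia. replace (S m - 0 - 1)%nat with m by lia.
  rewrite Rmult_plus_distr_l.
  rewrite <- rsum_scal.
  assert (E : rsum m (fun j => c * (gs (S j) * (rsum (S m - S j) (fun d => h d * fs (S j + d)%nat) - rsum (S m - S j - 1) (fun d => h d * fs (S j + 1 + d)%nat)))) =
     rsum m (fun j => - ((fs (S j) + c * rsum (m - S j) (fun i => h i * fs (S j + 1 + i)%nat)) - (fs j + c * rsum (m - j) (fun i => h i * fs (j+1+i)%nat))) * gs (S j)) - rsum m (fun j => (fs j - fs (S j)) * gs (S j))).
  { rewrite <- rsum_minus. apply rsum_ext; intros j Hj.
    replace (S m - S j)%nat with (m - j)%nat by lia.
    replace (S m - S j - 1)%nat with (m - S j)%nat by lia.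
    rewrite (rsum_ext (m - j) (fun d => h d * fs (S j + d)%nat) (fun i => h i * fs (j + 1 + i)%nat))
      by (intros; do 2 f_equal; lia).
    replace (m - j - 1)%nat with (m - S j)%nat by lia. ring. }
  rewrite E. simpl (0 + _)%nat.
  replace (S m - 1)%nat with m by lia.
  rewrite (rsum_ext m (fun d => h d * fs (1 + d)%nat) (fun i => h i * fs (S i))) by reflexivity.
  ring.
Qed.

Theorem theorem3 (a : R) (k : nat) (alpha : R) (f g : R -> R) :
  (2 <= k)%nat -> 0 < alpha <= 1 ->
  let b := a + INR k in
  let mu := 1 - alpha in
  rsum k (fun i => f (a + INR i) * lfdiff a alpha g i) =
    f (b - 1) * g b - f a * g a
    + rsum (k - 1) (fun i => rfdiff a (k - 1) alpha f i * g (a + INR i + 1))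
    + mu / Gamma (mu + 1) * g a *
        (rsum k (fun i => falling (a + INR i + mu - a) (mu - 1) * f (a + INR i))
         - rsum (k - 1) (fun i => let t := a + INR (S i) in
                                  falling (t + mu - a - 1) (mu - 1) * f t)).
Proof.
  intros Hk _ b mu. subst b mu.
  destruct k as [|m]; [lia|]. replace (S m - 1)%nat with m by lia.
  set (mu := 1 - alpha).
  set (c := mu / Gamma (mu + 1)).
  set (fs := fun j => f (a + INR j)).
  set (gs := fun j => g (a + INR j)).
  set (h := fun d => falling (INR d + mu) (mu - 1)).
  pose proof (key fs gs h c m) as K.
  replace (a + INR (S m) - 1) with (a + INR m) by (rewrite S_INR; ring).
  replace a with (a + INR 0) at 3 4 by (simpl; ring).
  change (f (a + INR m) * g (a + INR (S m)) - f (a + INR 0) * g (a + INR 0)) with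
    (fs m * gs (S m) - fs 0%nat * gs 0%nat).
  replace (g a) with (gs 0%nat) by (unfold gs; simpl; f_equal; ring).
  transitivity (rsum (S m) (fun j => fs j * ((gs (S j) + c * rsum (S j) (fun i => h (j - i)%nat * gs i)) - (gs j + c * rsum j (fun i => h (j - i - 1)%nat * gs i))))).
  { apply rsum_ext; intros j _. unfold lfdiff, lfsum. fold mu. fold c. unfold fs, gs, h.
    f_equal. f_equal; f_equal; f_equal; apply rsum_ext; intros i Hi; f_equal; f_equal.
    - rewrite minus_INR by lia. rewrite S_INR. ring.
    - rewrite !minus_INR by lia. simpl. ring. }
  rewrite K. f_equal. f_equal.
  - apply rsum_ext; intros j Hj. unfold rfdiff, rfsum. fold mu. fold c. unfold fs, gs, h.
    f_equal.
    + f_equal. f_equal.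
      * f_equal. f_equal. apply rsum_ext; intros i Hi. f_equal. f_equal.
        rewrite !plus_INR, S_INR. simpl. ring.
      * f_equal. f_equal. apply rsum_ext; intros i Hi. f_equal. f_equal.
        rewrite !plus_INR. simpl. ring.
    + f_equal. rewrite S_INR. ring.
  - f_equal. f_equal.
    + apply rsum_ext; intros i Hi. unfold fs, h. f_equal. f_equal. ring.
    + apply rsum_ext; intros i Hi. unfold fs, h. f_equal. f_equal. rewrite S_INR. ring.
Qed.
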